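(* Let $p\geq 2$ be an even integer and let $U_p=\bigcup_{n\in 2\mathbb Z_+}\mathbb Z_p^n$. Let $\tau\in\{1,\ldots,p\}$ be such that $\tau\equiv 0\pmod 2$, $\tau\mid p$ and $p/\tau\equiv 0\pmod 2$. Let $\boldsymbol a,\boldsymbol b\in U_p$ be equivalent (in the sense defined in the context). Then $\mu_{p,\tau}(\boldsymbol a)=\mu_{p,\tau}(\boldsymbol b)$.
   Context: $\mathbb Z_+$ denotes the positive integers and $\mathbb Z_p=\mathbb Z/p\mathbb Z$. Two elements of $U_p$ are called equivalent if they are related by a finite sequence of the following transformations of $(a_1,\ldots,a_n)\in\mathbb Z_p^n$ ($n$ even): (Op1) $(a_1,\ldots,a_n)\to(a_2,\ldots,a_n,a_1)$; (Op2) $(a_1,\ldots,a_n)\to(a, a_2+(-1)^2(a_1-a),\ldots,a_i+(-1)^i(a_1-a),\ldots,a_n+(-1)^n(a_1-a))$ for any $a\in\mathbb Z_p$; (Op3) $(a_1,\ldots,a_n)\to(a, a_1-a_2+a,\ldots,a_1-a_i+a,\ldots,a_1-a_n+a)$ for any $a\in\mathbb Z_p$; (Op4) $(a_1,\ldots,a_n)\to(a_1,-a_1+a_2+a_3,a_3,\ldots,a_n)$ when $n>3$. For $\boldsymbol a=(a_1,\ldots,a_n)\in U_p$, $\tau_p(\boldsymbol a)$ is the maximum of all $k\in\{1,\ldots,p\}$ with $k\mid p$ and $a_1+a_2\equiv a_2+a_3\equiv\cdots\equiv a_n+a_1\pmod k$. For an even integer $q\ge 2$ and a tuple $(b_1,\ldots,b_m)$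 of elements of $\mathbb Z_q$, let $E$ (resp. $O$) count the number of entries that are even (resp. odd), and define $\mu_q(b_1,\ldots,b_m)=E(b_1+b_2,\ldots,b_{m-1}+b_m,b_m+b_1)-O(b_1+b_2,\ldots,b_{m-1}+b_m,b_m+b_1)$. Define $\mu_{p,\tau}:U_p\to\mathbb Z\cup\{\infty\}$ as follows. If $\tau_p(\boldsymbol a)\neq\tau$, then $\mu_{p,\tau}(\boldsymbol a)=\infty$. If $\tau_p(\boldsymbol a)=\tau$, then $a_{2j-1}-a_1$ and $a_{2j}-a_2$ are divisible by $\tau$ in $\mathbb Z_p$ for all $j$, and dividing by $\tau$ gives well-defined elements of $\mathbb Z_{p/\tau}$; set $\mu_{p,\tau}(\boldsymbol a)=\left|\mu_{p/\tau}\left(\frac{a_1-a_1}{\tau},\frac{a_2-a_2}{\tau},\frac{a_3-a_1}{\tau},\frac{a_4-a_2}{\tau},\ldots,\frac{a_{2j-1}-a_1}{\tau},\frac{a_{2j}-a_2}{\tau},\ldots,\frac{a_{n-1}-a_1}{\tau},\frac{a_n-a_2}{\tau}\right)\right|$, i.e. odd-indexed entries have $a_1$ subtracted and even-indexed entries have $a_2$ subtracted. *)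

(* Defs.v *)
From HB Require Import structures.
From mathcomp Require Import all_boot all_order all_algebra.
From Stdlib Require Import Relations.
Set Implicit Arguments. Unset Strict Implicit. Unset Printing Implicit Defensive.
Import GRing.Theory.
Local Open Scope ring_scope.

Definition inU (p : nat) (s : seq 'Z_p) : bool :=
  (0 < size s)%N && ~~ odd (size s).

Definition csums (q : nat) (s : seq 'Z_q) : seq 'Z_q :=
  [seq x.1 + x.2 | x <- zip s (rot 1 s)].

Definition op1 (p : nat) (s : seq 'Z_p) : seq 'Z_p := rot 1 s.
(* Op2: a_i -> a_i + (-1)^i (a_1 - a)  (1-based i; index i is 0-based here) *)
Definition op2 (p : nat) (a : 'Z_p) (s : seq 'Z_p) : seq 'Z_p :=
  [seq s`_i + (-1) ^+ i.+1 * (s`_0 - a) | i <- iota 0 (size s)].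
Definition op3 (p : nat) (a : 'Z_p) (s : seq 'Z_p) : seq 'Z_p :=
  [seq s`_0 - s`_i + a | i <- iota 0 (size s)].
Definition op4 (p : nat) (s : seq 'Z_p) : seq 'Z_p :=
  set_nth 0 s 1 (- s`_0 + s`_1 + s`_2).

Definition step (p : nat) (s t : seq 'Z_p) : Prop :=
  inU s /\
  [\/ t = op1 s,
      exists a, t = op2 a s,
      exists a, t = op3 a s
    | (3 < size s)%N /\ t = op4 s].

Definition equivalent (p : nat) (s t : seq 'Z_p) : Prop :=
  inU s /\ inU t /\ clos_refl_sym_trans _ (@step p) s t.

(* congruence mod k of two elements of Z_p (well defined when k | p) *)
Definition congr_mod (p : nat) (k : nat) (x y : 'Z_p) : bool :=
  (val x == val y %[mod k])%N.

Definition tau_p (p : nat) (s : seq 'Z_p) : nat :=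
  \max_(k < p.+1 | [&& (0 < k)%N, (k %| p)%N &
                     all (fun x => congr_mod k x (csums s)`_0) (csums s)]) k.

(* mu_q(b) = E - O, counting even/odd entries of the consecutive sums;
   parity of an element of Z_q (q even) is that of its representative. *)
Definition mu_q (q : nat) (s : seq 'Z_q) : int :=
  (count (fun x : 'Z_q => ~~ odd (val x)) (csums s))%:Z
  - (count (fun x : 'Z_q => odd (val x)) (csums s))%:Z.

(* division by tau: Z_p -> Z_{p/tau}, for elements divisible by tau *)
Definition divtau (p tau : nat) (x : 'Z_p) : 'Z_(p %/ tau) :=
  inZp (val x %/ tau).

Definition reduce (p tau : nat) (s : seq 'Z_p) : seq 'Z_(p %/ tau) :=
  [seq divtau tau (s`_i - (if odd i then s`_1 else s`_0)) | i <- iota 0 (size s)].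

(* mu_{p,tau} : U_p -> Z u {oo}; None stands for infinity *)
Definition mu_ptau (p tau : nat) (s : seq 'Z_p) : option nat :=
  if tau_p s == tau then Some `|mu_q (reduce tau s)|%N else None.

(* Main.v *)
Require Import Defs.
From mathcomp Require Import all_boot all_order all_algebra.
From mathcomp Require Import ring zify.
Set Implicit Arguments. Unset Strict Implicit. Unset Printing Implicit Defensive.
Import GRing.Theory.
Local Open Scope ring_scope.

Lemma valD (p : nat) (p1 : (1 < p)%N) (x y : 'Z_p) : val (x + y)%R = ((val x + val y) %% p)%N.
Proof. rewrite /=; congr (_ %% _)%N; exact: Zp_cast. Qed.

Lemma nth_rot1 (T : Type) (x0 : T) (s : seq T) i : (i < size s)%N ->
  nth x0 (rot 1 s) i = nth x0 s (i.+1 %% size s).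
Proof.
case: s => [//|x t] /= Hi; rewrite rot1_cons nth_rcons.
case: ltnP => H.
  by rewrite modn_small //=; lia.
have -> : i = size t by lia.
by rewrite eqxx modnn.
Qed.

Lemma size_csums (p : nat) (s : seq 'Z_p) : size (csums s) = size s.
Proof. by rewrite /csums size_map size_zip size_rot minnn. Qed.

Lemma nth_csums (p : nat) (s : seq 'Z_p) i : (i < size s)%N ->
  (csums s)`_i = (s`_i + s`_(i.+1 %% size s))%R.
Proof.
move=> Hi; rewrite /csums (nth_map (0,0)%R); last by rewrite size_zip size_rot minnn.
by rewrite nth_zip ?size_rot //= nth_rot1.
Qed.

Lemma odd_inZp q (q1 : (1 < q)%N) (qe : ~~ odd q) m : odd (val (inZp m : 'Z_q)) = odd m.
Proof. by rewrite /= Zp_cast // odd_mod //; apply/negbTE. Qed.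

Lemma oddD_Zp q (q1 : (1 < q)%N) (qe : ~~ odd q) (x y : 'Z_q) :
  odd (val (x + y)%R) = odd (val x) (+) odd (val y).
Proof. by rewrite valD // odd_mod ?oddD //; apply/negbTE. Qed.

Definition Bm (bs : seq bool) : int := (count negb bs)%:Z - (count id bs)%:Z.

Lemma Bm_perm bs bs' : perm_eq bs bs' -> Bm bs = Bm bs'.
Proof. by move/permP => H; rewrite /Bm !H. Qed.

Lemma Bm_neg bs : Bm (map negb bs) = (- Bm bs)%R.
Proof.
rewrite /Bm !count_map (@eq_count _ (preim negb negb) id); last by move=> b /=; rewrite negbK.
by rewrite opprB.
Qed.

Lemma Bm_xor b bs : `|Bm (map (fun c => c (+) b) bs)|%N = `|Bm bs|%N.
Proof.
case: b.
  rewrite (@eq_map _ _ _ negb); last by move=> c; rewrite addbT.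
  by rewrite Bm_neg abszN.
by rewrite (@eq_map _ _ _ id) ?map_id // => c; rewrite addbF.
Qed.

Lemma Bm_swap a b l : Bm (a :: b :: l) = Bm (b :: a :: l).
Proof. rewrite /Bm /=; congr (_%:Z - _%:Z); lia. Qed.

Lemma max_att n (Q : pred 'I_n) m : (\max_(k | Q k) k)%N = m -> (0 < m)%N ->
  exists2 k : 'I_n, Q k & nat_of_ord k = m.
Proof.
move=> <-.
apply: (big_ind (fun x => (0 < x)%N -> exists2 k : 'I_n, Q k & nat_of_ord k = x)) => //.
  move=> x y Hx Hy; rewrite /maxn; case: ifP => _ H.
    exact: Hy.
  exact: Hx.
by move=> i Qi _; exists i.
Qed.

Section S.
Variables p tau : nat.
Hypothesis p1 : (1 < p)%N.
Hypothesis tau0 : (0 < tau)%N.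
Hypothesis taup : (tau %| p)%N.
Hypothesis qe : ~~ odd (p %/ tau).
Local Open Scope ring_scope.

Definition mt k (x : 'Z_p) := (k %| val x)%N.

Lemma dvd_modp k a : (k %| p)%N -> (k %| a %% p)%N = (k %| a)%N.
Proof. by move=> H; rewrite /dvdn modn_dvdm. Qed.

Lemma mtDr k (x y : 'Z_p) : (k %| p)%N -> mt k x -> mt k (x + y) = mt k y.
Proof. by move=> H Hx; rewrite /mt valD // dvd_modp // dvdn_addr. Qed.

Lemma mt0 k : mt k (0 : 'Z_p).
Proof. by rewrite /mt dvdn0. Qed.

Lemma mtN k (x : 'Z_p) : (k %| p)%N -> mt k (- x) = mt k x.
Proof.
move=> H; apply/idP/idP => Hx.
  by rewrite -(mtDr x H Hx) addNr mt0.
by rewrite -(mtDr (-x) H Hx) addrN mt0.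
Qed.

Lemma mtD k (x y : 'Z_p) : (k %| p)%N -> mt k x -> mt k y -> mt k (x + y).
Proof. by move=> H Hx Hy; rewrite mtDr. Qed.

Lemma mtB k (x y : 'Z_p) : (k %| p)%N -> mt k x -> mt k y -> mt k (x - y).
Proof. by move=> H Hx Hy; rewrite mtD // mtN. Qed.

Lemma congr_mt k (x y : 'Z_p) : (k %| p)%N -> congr_mod k x y = mt k (x - y).
Proof.
move=> H; rewrite /congr_mod /mt.
have -> : val x = val (x - y + y) by rewrite subrK.
rewrite valD // modn_dvdm // -{2}(add0n (val y)) eqn_modDr.
by rewrite /dvdn mod0n.
Qed.

Definition g (x : 'Z_p) := odd (val x %/ tau).

Lemma gD (x y : 'Z_p) : mt tau x -> g (x + y) = g x (+) g y.
Proof.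
move=> Hx; rewrite /g valD // divn_modl // odd_mod; last by apply/negbTE.
by rewrite divnDl // oddD.
Qed.

Lemma gN (x : 'Z_p) : mt tau x -> g (- x) = g x.
Proof.
move=> Hx; have := gD (- x) Hx; rewrite addrN /g /= div0n /=.
by case: (odd _); case: (odd _).
Qed.

Definition Pr k (r : 'Z_p) (cs : seq 'Z_p) := all (fun c => mt k (c - r)) cs.

Lemma Pk_Pr k (cs : seq 'Z_p) : (k %| p)%N ->
  all (fun x => congr_mod k x cs`_0) cs = Pr k cs`_0 cs.
Proof. by move=> H; apply: eq_all => c; rewrite congr_mt. Qed.

Lemma Pr_ref1 k r r' (cs : seq 'Z_p) : (k %| p)%N -> r' \in cs ->
  Pr k r cs -> Pr k r' cs.
Proof.
move=> H Hr' /allP Hall; apply/allP => c Hc.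
have -> : c - r' = (c - r) - (r' - r) by ring.
by apply: mtB => //; apply: Hall.
Qed.

Lemma Pr_ref k r r' (cs : seq 'Z_p) : (k %| p)%N -> r \in cs -> r' \in cs ->
  Pr k r cs = Pr k r' cs.
Proof. by move=> H Hr Hr'; apply/idP/idP; apply: Pr_ref1. Qed.

Definition Mr (r : 'Z_p) (cs : seq 'Z_p) := Bm (map (fun c => g (c - r)) cs).

Lemma Mr_ref r r' (cs : seq 'Z_p) : Pr tau r cs -> r' \in cs ->
  `|Mr r' cs|%N = `|Mr r cs|%N.
Proof.
move=> /allP Hall Hr'; rewrite /Mr.
have -> : map (fun c => g (c - r')) cs = map (fun c => g (c - r) (+) g (r - r')) cs.
  apply/eq_in_map => c Hc /=.
  have -> : c - r' = (c - r) + (r - r') by ring.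
  by rewrite [LHS]gD //; apply: Hall.
rewrite (map_comp (fun b => b (+) g (r - r')) (fun c => g (c - r))).
by rewrite Bm_xor.
Qed.

Definition TP (cs : seq 'Z_p) :=
  \max_(k < p.+1 | [&& (0 < k)%N, (k %| p)%N &
                     all (fun x => congr_mod k x cs`_0) cs]) k.

Lemma TP_tau (s : seq 'Z_p) : tau_p s = TP (csums s).
Proof. by []. Qed.

Lemma TP_eq (cs ct : seq 'Z_p) :
  (forall k, (0 < k)%N -> (k %| p)%N -> Pr k cs`_0 cs = Pr k ct`_0 ct) ->
  TP cs = TP ct.
Proof.
move=> H; apply: eq_bigl => k.
case: (posnP k) => [->|kp] //=.
case Hk: (k %| p)%N => //=.
by rewrite !Pk_Pr // H.
Qed.

Lemma TP_att (cs : seq 'Z_p) : TP cs = tau -> Pr tau cs`_0 cs.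
Proof.
rewrite /TP => HT.
have [k Qk Hk] := max_att HT tau0.
move: Qk => /and3P [_ _ Hall].
by rewrite -Pk_Pr // -Hk.
Qed.

Lemma q1 : (1 < (p %/ tau)%N)%N.
Proof.
have H1 : (0 < (p %/ tau)%N)%N by rewrite divn_gt0 // dvdn_leq // ltnW.
by move: qe H1; case: (p %/ tau)%N => [|[|]].
Qed.

Lemma mt_d (s : seq 'Z_p) : ~~ odd (size s) -> Pr tau (csums s)`_0 (csums s) ->
  forall i, (i < size s)%N -> mt tau (s`_i - (if odd i then s`_1 else s`_0)).
Proof.
move=> ev /(all_nthP 0) Hall.
have Hc : forall k, (k < size s)%N -> mt tau ((csums s)`_k - (csums s)`_0).
  by move=> k Hk; apply: Hall; rewrite size_csums.
suff H : forall i, (i < size s)%N -> mt tau (s`_i - (if odd i then s`_1 else s`_0)) /\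
   ((i.+1 < size s)%N -> mt tau (s`_i.+1 - (if odd i.+1 then s`_1 else s`_0))).
  by move=> i Hi; case: (H i Hi).
elim=> [|i IH] Hi.
  by rewrite /= !subrr; split => [|_]; apply: mt0.
have [_ H2] := IH (ltnW Hi); split; first exact: H2.
move=> Hi2.
have -> : s`_i.+2 - (if odd i.+2 then s`_1 else s`_0) =
   ((csums s)`_i.+1 - (csums s)`_0) - ((csums s)`_i - (csums s)`_0) +
   (s`_i - (if odd i then s`_1 else s`_0)).
  rewrite !nth_csums; try lia.
  rewrite !modn_small; try lia.
  rewrite /= negbK; ring.
apply: mtD => //; last by case: (IH (ltnW (ltnW Hi2))).
by apply: mtB => //; apply: Hc; lia.
Qed.

Lemma mu_Bm q (t : seq 'Z_q) : mu_q t = Bm (map (fun x => odd (val x)) (csums t)).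
Proof. by rewrite /mu_q /Bm !count_map. Qed.

Lemma size_reduce (s : seq 'Z_p) : size (reduce tau s) = size s.
Proof. by rewrite /reduce size_map size_iota. Qed.

Lemma nth_reduce (s : seq 'Z_p) j : (j < size s)%N ->
  (reduce tau s)`_j = divtau tau (s`_j - (if odd j then s`_1 else s`_0)).
Proof. by move=> Hj; rewrite /reduce (nth_map 0%N) ?size_iota // nth_iota. Qed.

Lemma mu_formula (s : seq 'Z_p) : ~~ odd (size s) -> (0 < size s)%N ->
  Pr tau (csums s)`_0 (csums s) ->
  mu_q (reduce tau s) = Mr (csums s)`_0 (csums s).
Proof.
move=> ev n0 HP; rewrite mu_Bm /Mr; congr Bm.
have E1 : size [seq odd (val x) | x <- csums (reduce tau s)] = size s.
  by rewrite size_map size_csums size_reduce.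
have E2 : size [seq g (c - (csums s)`_0) | c <- csums s] = size s.
  by rewrite size_map size_csums.
apply: (@eq_from_nth _ false); first by rewrite E1 E2.
rewrite E1 => i Hi.
rewrite [LHS](nth_map 0); last by rewrite size_csums size_reduce.
rewrite [RHS](nth_map 0); last by rewrite size_csums.
have n2 : (1 < size s)%N by move: ev n0; case: (size s) => [|[|]].
have Hj : (i.+1 %% size s < size s)%N by rewrite ltn_mod; lia.
have oj : odd (i.+1 %% size s) = ~~ odd i by rewrite odd_mod /=; [|apply/negbTE].
rewrite [in LHS]nth_csums ?size_reduce // oddD_Zp ?q1 //.
rewrite !nth_reduce // /divtau !odd_inZp ?q1 //.
rewrite -/(g _) -/(g _) -gD; last exact: mt_d.
rewrite !nth_csums // (modn_small n2) oj.
congr g; case: (odd i) => /=; ring.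
Qed.

Lemma cs_op1 (s : seq 'Z_p) : csums (op1 s) = rot 1 (csums s).
Proof.
apply: (@eq_from_nth _ 0); first by rewrite [LHS]size_csums [RHS]size_rot size_csums /op1 size_rot.
rewrite size_csums /op1 size_rot => i Hi.
have Hj : (i.+1 %% size s < size s)%N by rewrite ltn_mod; lia.
rewrite [RHS]nth_rot1 ?size_csums // nth_csums //.
rewrite nth_csums ?size_rot // nth_rot1 // nth_rot1 //.
by rewrite size_rot.
Qed.

Lemma nth_op2 a (s : seq 'Z_p) j : (j < size s)%N ->
  (op2 a s)`_j = s`_j + (-1) ^+ j.+1 * (s`_0 - a).
Proof. by move=> Hj; rewrite /op2 (nth_map 0%N) ?size_iota // nth_iota. Qed.

Lemma size_op2 a (s : seq 'Z_p) : size (op2 a s) = size s.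
Proof. by rewrite /op2 size_map size_iota. Qed.

Lemma cs_op2 a (s : seq 'Z_p) : ~~ odd (size s) -> csums (op2 a s) = csums s.
Proof.
move=> ev.
apply: (@eq_from_nth _ 0); first by rewrite !size_csums size_op2.
rewrite size_csums size_op2 => i Hi.
have Hj : (i.+1 %% size s < size s)%N by rewrite ltn_mod; lia.
have oj : odd (i.+1 %% size s) = ~~ odd i by rewrite odd_mod /=; [|apply/negbTE].
rewrite nth_csums ?size_op2 // !nth_op2 // [RHS]nth_csums //.
have o1 : odd i.+1 = ~~ odd i by [].
have o2 : odd (i.+1 %% size s).+1 = odd i by rewrite /= oj negbK.
have sg : forall n, (-1) ^+ n = (-1) ^+ (odd n) :> 'Z_p by move=> n; rewrite signr_odd.
by rewrite (sg i.+1) (sg (i.+1 %% size s).+1) o1 o2 signrN; ring.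
Qed.

Lemma nth_op3 a (s : seq 'Z_p) j : (j < size s)%N ->
  (op3 a s)`_j = s`_0 - s`_j + a.
Proof. by move=> Hj; rewrite /op3 (nth_map 0%N) ?size_iota // nth_iota. Qed.

Lemma size_op3 a (s : seq 'Z_p) : size (op3 a s) = size s.
Proof. by rewrite /op3 size_map size_iota. Qed.

Lemma cs_op3 a (s : seq 'Z_p) :
  csums (op3 a s) = map (fun c => (s`_0 + a + (s`_0 + a)) - c) (csums s).
Proof.
apply: (@eq_from_nth _ 0); first by rewrite [LHS]size_csums [RHS]size_map size_csums size_op3.
rewrite size_csums size_op3 => i Hi.
have Hj : (i.+1 %% size s < size s)%N by rewrite ltn_mod; lia.
rewrite nth_csums ?size_op3 // !nth_op3 //.
rewrite (nth_map 0) ?size_csums // nth_csums //; ring.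
Qed.

Lemma cs_op4 (x0 x1 x2 : 'Z_p) r :
  csums (op4 [:: x0, x1, x2 & r]) =
    (x1 + x2) :: (- x0 + x1 + x2 + x2) :: behead (behead (csums [:: x0, x1, x2 & r])) /\
  csums [:: x0, x1, x2 & r] =
    (x0 + x1) :: (x1 + x2) :: behead (behead (csums [:: x0, x1, x2 & r])).
Proof.
rewrite /csums /op4 /= ?rot1_cons /=; split => //.
congr (_ :: _ :: _); ring.
Qed.

Lemma fin (s t : seq 'Z_p) : size t = size s -> ~~ odd (size s) -> (0 < size s)%N ->
  (forall k, (0 < k)%N -> (k %| p)%N ->
     Pr k (csums s)`_0 (csums s) = Pr k (csums t)`_0 (csums t)) ->
  (Pr tau (csums s)`_0 (csums s) -> Pr tau (csums t)`_0 (csums t) ->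
     absz (Mr (csums s)`_0 (csums s)) = absz (Mr (csums t)`_0 (csums t))) ->
  mu_ptau tau s = mu_ptau tau t.
Proof.
move=> Et ev n0 HP HM.
rewrite /mu_ptau !TP_tau (TP_eq HP).
case: eqP => // E.
have Ht := TP_att E.
have Hs : Pr tau (csums s)`_0 (csums s) by rewrite HP.
rewrite !mu_formula ?Et //; congr Some; exact: HM.
Qed.

Lemma mem0 (cs : seq 'Z_p) : (0 < size cs)%N -> cs`_0 \in cs.
Proof. by move=> H; apply: mem_nth. Qed.

Lemma step_inv (s t : seq 'Z_p) : step s t -> mu_ptau tau s = mu_ptau tau t.
Proof.
case=> /andP [n0 ev] [Ht|[a Ht]|[a Ht]|[n3 Ht]]; subst t.
- have cs0 : (0 < size (csums s))%N by rewrite size_csums.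
  have ct0 : (csums (op1 s))`_0 \in csums s.
    by rewrite cs_op1 -(mem_rot 1); apply: mem0; rewrite size_rot.
  apply: fin => //; first by rewrite /op1 size_rot.
    have hp : perm_eq (rot 1 (csums s)) (csums s) by rewrite perm_rot.
    move=> k k0 kp; rewrite [in RHS]/Pr cs_op1 (perm_all _ hp).
    rewrite -cs_op1; apply: Pr_ref => //; exact: mem0.
  move=> HPs _.
  have -> : forall r, Mr r (csums (op1 s)) = Mr r (csums s).
    by move=> r; rewrite /Mr cs_op1 map_rot; apply: Bm_perm; rewrite perm_rot.
  by rewrite (Mr_ref HPs ct0).
- by apply: fin => //; [rewrite size_op2 | rewrite cs_op2 | rewrite cs_op2].
- have cs0 : (0 < size (csums s))%N by rewrite size_csums.
  apply: fin => //; first by rewrite size_op3.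
    move=> k k0 kp; rewrite cs_op3 /Pr [in RHS](nth_map 0) // [RHS]all_map.
    apply: eq_all => c /=.
    rewrite (_ : s`_0 + a + (s`_0 + a) - c - (s`_0 + a + (s`_0 + a) - (csums s)`_0)
               = - (c - (csums s)`_0)); last by ring.
    by rewrite mtN.
  move=> /allP HPs _; rewrite cs_op3 [in RHS](nth_map 0) // /Mr.
  congr (`|Bm _|%N); rewrite -[RHS]map_comp; apply/eq_in_map => c Hc /=.
  rewrite (_ : s`_0 + a + (s`_0 + a) - c - (s`_0 + a + (s`_0 + a) - (csums s)`_0)
               = - (c - (csums s)`_0)); last by ring.
  by rewrite gN //; apply: HPs.
- move: n0 ev n3; case: s => [|x0 [|x1 [|x2 r]]] // n0 ev n3.
  have [E4 Es] := cs_op4 x0 x1 x2 r.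
  set tl := behead (behead _) in E4 Es.
  have m1 : x1 + x2 \in csums [:: x0, x1, x2 & r] by rewrite Es !inE eqxx orbT.
  have m0 : x0 + x1 \in csums [:: x0, x1, x2 & r] by rewrite Es !inE eqxx.
  have e1 : - x0 + x1 + x2 + x2 - (x1 + x2) = - (x0 + x1 - (x1 + x2)) by ring.
  apply: fin => //.
    move=> k k0 kp.
    rewrite {1}Es [_`_0]/= (Pr_ref _ m0 m1) // Es E4 /Pr /= e1 mtN // subrr mt0.
    by rewrite andbCA.
  move=> HPs _.
  rewrite {1}Es [_`_0]/= -(Mr_ref HPs m1) Es E4 /Mr /= Bm_swap e1 subrr gN //.
  move: HPs; rewrite (Pr_ref _ m0 m1) // Es /Pr /=.
  by case/andP.
Qed.

End S.

Local Close Scope ring_scope.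

Theorem mainTheorem4 (p tau : nat) (a b : seq 'Z_p) :
  (2 <= p)%N -> ~~ odd p ->
  (1 <= tau <= p)%N -> ~~ odd tau -> (tau %| p)%N -> ~~ odd (p %/ tau) ->
  inU a -> inU b -> equivalent a b ->
  mu_ptau tau a = mu_ptau tau b.
Proof.
move=> p2 pe /andP [t1 tp] te tdp qe' Ha Hb [_ [_ H]].
clear Ha Hb.
induction H as [x y Hs | x | x y _ IH | x y z _ IH1 _ IH2].
- exact: (step_inv p2 t1 tdp qe' Hs).
- by [].
- by rewrite IH.
- by rewrite IH1 IH2.
Qed.
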